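(* The functor $\mathbf F:\mathbf{PA}\to\mathbf{DRC}$, $P\mapsto\mathbb F(P)$, is a left adjoint to the forgetful functor $\mathbf P:\mathbf{DRC}\to\mathbf{PA}$, $S\mapsto\mathbf P(S)$, and $\mathbf{PA}$ is coreflective in $\mathbf{DRC}$.
   Context: Maps are written on the right and composed left to right. A projection algebra is a set $P$ with maps $\theta_p,\delta_p:P\to P$ ($p\in P$) such that for all $p,q$: $p\theta_p=p$, $p\delta_p=p$; $p\theta_{q\theta_p}=q\theta_p$, $p\delta_{q\delta_p}=q\delta_p$; $\theta_q\theta_{q\theta_p}=\theta_q\theta_p$, $\delta_q\delta_{q\delta_p}=\delta_q\delta_p$; $\theta_p\delta_p=\theta_p$, $\delta_p\theta_p=\delta_p$; $\theta_{p\delta_q}\theta_p=\theta_q\theta_p$, $\delta_{p\theta_q}\delta_p=\delta_q\delta_p$. A projection algebra morphism $\phi$ satisfies $(q\theta_p)\phi=(q\phi)\theta_{p\phi}$ and $(q\delta_p)\phi=(q\phi)\delta_{p\phi}$; $\mathbf{PA}$ is the category of projection algebras. Write $p\,\mathscr F\,q$ iff $p=q\delta_p$ and $q=p\theta_q$. A DRC-semigroup is $(S,\cdot,D,R)$, $(S,\cdot)$ a semigroup, $D,R:S\to S$ with, for all $a,b$: $D(a)a=a$, $aR(a)=a$; $D(ab)=D(aD(b))$, $R(ab)=R(R(a)b)$; $D(ab)=D(a)D(ab)D(a)$, $R(ab)=R(b)R(ab)R(b)$; $R(D(a))=D(a)$, $D(R(a))=R(a)$. $\mathbf{DRC}$ is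 the category of DRC-semigroups with maps preserving $\cdot,D,R$. The forgetful functor $\mathbf P$ sends $S$ to $\mathbf P(S)=\{D(a):a\in S\}$ with $q\theta_p=R(qp)$, $q\delta_p=D(pq)$, and a DRC-morphism to its restriction to projections. $\mathbb F(P)$ is the semigroup with presentation on generators $x_p$ ($p\in P$) and relations $x_p^2=x_p$, $x_px_q=x_px_{p\theta_q}$, $x_px_q=x_{q\delta_p}x_q$ ($p,q\in P$); $\overline w$ denotes the class of a word $w$. Every element equals $\overline{x_{p_1}\cdots x_{p_k}}$ for some $p_1\mathscr F p_2\mathscr F\cdots\mathscr F p_k$, and $p_1,p_k$ are determined by the element; $D$ and $R$ on $\mathbb F(P)$ are given by $D(\overline{x_{p_1}\cdots x_{p_k}})=\overline{x_{p_1}}$, $R(\overline{x_{p_1}\cdots x_{p_k}})=\overline{x_{p_k}}$, making $\mathbb F(P)$ a DRC-semigroup whose projection algebra is identified with $P$ via $p\leftrightarrow\overline{x_p}$. For a projection algebra morphism $\phi:P\to P'$, $\mathbf F(\phi):\mathbb F(P)\to\mathbb F(P')$ is the DRC-morphism $\overline w\mapsto\overline{w'}$ where $w'$ replaces each $x_p$ by $x_{p\phi}$. *)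

(* Defs.v *)
From Stdlib Require Import List Relations ClassicalEpsilon.
Import ListNotations.
Set Implicit Arguments.

(** Projection algebras.  Maps are written on the right:
    [theta q p] stands for  q θ_p  and  [delta q p] for  q δ_p. *)
Record PAops := { pa_car :> Type;
                  theta : pa_car -> pa_car -> pa_car;
                  delta : pa_car -> pa_car -> pa_car }.
Arguments theta {_} _ _.
Arguments delta {_} _ _.

Definition is_PA (P : PAops) : Prop :=
  forall p q : P,
    theta p p = p /\ delta p p = p /\
    theta p (theta q p) = theta q p /\
    delta p (delta q p) = delta q p /\
    (* θ_q θ_{qθ_p} = θ_q θ_p, applied to r (left-to-right composition) *)
    (forall r, theta (theta r q) (theta q p) = theta (theta r q) p) /\
    (forall r, delta (delta r q) (delta q p) = delta (delta r q) p) /\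
    (forall r, delta (theta r p) p = theta r p) /\
    (forall r, theta (delta r p) p = delta r p) /\
    (forall r, theta (theta r (delta p q)) p = theta (theta r q) p) /\
    (forall r, delta (delta r (theta p q)) p = delta (delta r q) p).

Definition pa_hom (P Q : PAops) (phi : P -> Q) : Prop :=
  forall p q : P, phi (theta q p) = theta (phi q) (phi p) /\
                  phi (delta q p) = delta (phi q) (phi p).

Record DRCops := { drc_car :> Type;
                   mul : drc_car -> drc_car -> drc_car;
                   opD : drc_car -> drc_car;
                   opR : drc_car -> drc_car }.
Arguments mul {_} _ _.
Arguments opD {_} _.
Arguments opR {_} _.

Definition is_DRC (S : DRCops) : Prop :=
  (forall a b c : S, mul (mul a b) c = mul a (mul b c)) /\
  forall a b : S,
    mul (opD a) a = a /\ mul a (opR a) = a /\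
    opD (mul a b) = opD (mul a (opD b)) /\
    opR (mul a b) = opR (mul (opR a) b) /\
    opD (mul a b) = mul (mul (opD a) (opD (mul a b))) (opD a) /\
    opR (mul a b) = mul (mul (opR b) (opR (mul a b))) (opR b) /\
    opR (opD a) = opD a /\ opD (opR a) = opR a.

Definition drc_hom (S T : DRCops) (f : S -> T) : Prop :=
  forall a b : S, f (mul a b) = mul (f a) (f b) /\
                  f (opD a) = opD (f a) /\ f (opR a) = opR (f a).

(** The projections P(S) = { D(a) : a ∈ S } of S, with q θ_p = R(qp), q δ_p = D(pq). *)
Definition is_proj (S : DRCops) (x : S) : Prop := exists a : S, opD a = x.

(** [f : P -> S] is a projection-algebra morphism P -> P(S)
    (its values lie in P(S) and it preserves θ and δ of P(S)). *)
Definition pa_hom_to_P (P : PAops) (S : DRCops) (f : P -> S) : Prop :=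
  (forall p, is_proj S (f p)) /\
  forall p q : P, f (theta q p) = opR (mul (f q) (f p)) /\
                  f (delta q p) = opD (mul (f p) (f q)).

Section Free.
Variable P : PAops.

Inductive step : list P -> list P -> Prop :=
| st_idem  l r p   : step (l ++ p :: p :: r) (l ++ p :: r)
| st_theta l r p q : step (l ++ p :: q :: r) (l ++ p :: theta p q :: r)
| st_delta l r p q : step (l ++ p :: q :: r) (l ++ delta q p :: q :: r).

Definition weq : list P -> list P -> Prop := clos_refl_sym_trans _ step.

(* a nonempty word is a pair (first letter, rest) *)
Definition word := (P * list P)%type.
Definition wlist (w : word) : list P := fst w :: snd w.

Record Fcar := { fcls : list P -> Prop;
                 fcls_ok : exists w : word, fcls = weq (wlist w) }.

Definition cls (w : word) : Fcar :=
  {| fcls := weq (wlist w); fcls_ok := ex_intro _ w eq_refl |}.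

Definition rep (a : Fcar) : word :=
  proj1_sig (constructive_indefinite_description _ (fcls_ok a)).

Definition Fmul (a b : Fcar) : Fcar :=
  cls (fst (rep a), snd (rep a) ++ wlist (rep b)).

Definition Frel (p q : P) : Prop := p = delta q p /\ q = theta p q.

Fixpoint chain (p : P) (l : list P) : Prop :=
  match l with [] => True | q :: l' => Frel p q /\ chain q l' end.

Definition chain_rep (a : Fcar) : word :=
  epsilon (inhabits (rep a)) (fun w => chain (fst w) (snd w) /\ fcls a (wlist w)).

Definition xgen (p : P) : Fcar := cls (p, []).

Definition FD (a : Fcar) : Fcar := xgen (fst (chain_rep a)).
Definition FR (a : Fcar) : Fcar := xgen (last (snd (chain_rep a)) (fst (chain_rep a))).

Definition FreeDRC : DRCops := {| drc_car := Fcar; mul := Fmul; opD := FD; opR := FR |}.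

(* unit: p |-> class of x_p  (identification P = P(F(P))) *)
Definition eta (p : P) : FreeDRC := xgen p.
End Free.

Definition Fmor (P Q : PAops) (phi : P -> Q) (a : FreeDRC P) : FreeDRC Q :=
  cls (phi (fst (rep a)), map phi (snd (rep a))).
Arguments Fmor {P Q} phi a.
Arguments eta {P} p.

(* Main.v *)
Require Import Defs.
From Stdlib Require Import List Relations ClassicalEpsilon FunctionalExtensionality PropExtensionality ProofIrrelevance.
Import ListNotations.
Set Implicit Arguments.

Lemma th_idem (P : PAops) (HP : is_PA P) (p : P) : theta p p = p.
Proof. apply (HP p p). Qed.
Lemma de_idem (P : PAops) (HP : is_PA P) (p : P) : delta p p = p.
Proof. apply (HP p p). Qed.
Lemma A3 (P : PAops) (HP : is_PA P) (p q : P) : theta p (theta q p) = theta q p.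
Proof. apply (HP p q). Qed.
Lemma A4 (P : PAops) (HP : is_PA P) (p q : P) : delta p (delta q p) = delta q p.
Proof. apply (HP p q). Qed.
Lemma A5 (P : PAops) (HP : is_PA P) (p q r : P) : theta (theta r q) (theta q p) = theta (theta r q) p.
Proof. apply (HP p q). Qed.
Lemma A6 (P : PAops) (HP : is_PA P) (p q r : P) : delta (delta r q) (delta q p) = delta (delta r q) p.
Proof. apply (HP p q). Qed.
Lemma A7 (P : PAops) (HP : is_PA P) (p r : P) : delta (theta r p) p = theta r p.
Proof. apply (HP p p). Qed.
Lemma A8 (P : PAops) (HP : is_PA P) (p r : P) : theta (delta r p) p = delta r p.
Proof. apply (HP p p). Qed.
Lemma A9 (P : PAops) (HP : is_PA P) (p q r : P) : theta (theta r (delta p q)) p = theta (theta r q) p.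
Proof. apply (HP p q). Qed.
Lemma A10 (P : PAops) (HP : is_PA P) (p q r : P) : delta (delta r (theta p q)) p = delta (delta r q) p.
Proof. apply (HP p q). Qed.

Lemma th_th (P : PAops) (HP : is_PA P) (p r : P) : theta (theta r p) p = theta r p.
Proof. transitivity (theta (delta (theta r p) p) p). rewrite A7; auto. rewrite A8, A7; auto. Qed.
Lemma de_de (P : PAops) (HP : is_PA P) (p r : P) : delta (delta r p) p = delta r p.
Proof. transitivity (delta (theta (delta r p) p) p). rewrite A8; auto. rewrite A7, A8; auto. Qed.
Lemma th_self (P : PAops) (HP : is_PA P) (p q : P) : theta p (theta p q) = theta p q.
Proof. pose proof (A5 HP q p p) as H. rewrite th_idem in H; auto. Qed.
Lemma de_self (P : PAops) (HP : is_PA P) (p q : P) : delta p (delta p q) = delta p q.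
Proof. pose proof (A6 HP q p p) as H. rewrite de_idem in H; auto. Qed.
Lemma th_mixed (P : PAops) (HP : is_PA P) (p q : P) : theta p (delta q p) = delta q p.
Proof. rewrite <- (A8 HP p q). rewrite (A3 HP). reflexivity. Qed.
Lemma de_mixed (P : PAops) (HP : is_PA P) (p q : P) : delta p (theta q p) = theta q p.
Proof. rewrite <- (A7 HP p q). rewrite (A4 HP). reflexivity. Qed.
Lemma th_de2 (P : PAops) (HP : is_PA P) (p q : P) : theta (delta q p) q = theta p q.
Proof. pose proof (A9 HP q p p) as H. rewrite th_idem, th_mixed in H; auto. Qed.
Lemma de_th2 (P : PAops) (HP : is_PA P) (p q : P) : delta (theta p q) p = delta q p.
Proof. pose proof (A10 HP p q q) as H. rewrite de_idem, de_mixed in H; auto. Qed.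
Lemma de_fix_th (P : PAops) (HP : is_PA P) (e d : P) : delta e d = e -> theta e d = e.
Proof. intro H. rewrite <- H at 1. rewrite A8; auto. Qed.
Lemma th_fix_de (P : PAops) (HP : is_PA P) (e d : P) : theta e d = e -> delta e d = e.
Proof. intro H. rewrite <- H at 1. rewrite A7; auto. Qed.
Lemma lemC (P : PAops) (HP : is_PA P) (e e' g : P) :
  theta e e' = e' -> theta g e' = g -> delta g e' = g -> theta (delta g e) g = g.
Proof.
  intros H1 H2 H3.
  assert (E1 : theta e' g = g) by (rewrite <- H2 at 1; rewrite A3; auto).
  assert (E2 : theta e g = g).
  { rewrite <- (th_th HP g e). rewrite <- H3 at 1. rewrite A9; auto. rewrite H1; auto. }
  rewrite <- (th_mixed HP e g). rewrite A9; auto. rewrite th_idem; auto.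
Qed.
Unset Strict Implicit.

Lemma step_ctx (P : PAops) (a b u v : list P) : step P u v -> step P (a ++ u ++ b) (a ++ v ++ b).
Proof.
  intros H; destruct H; repeat rewrite <- app_assoc; simpl;
  repeat rewrite app_assoc; constructor.
Qed.

Lemma weq_ctx (P : PAops) (a b u v : list P) : weq P u v -> weq P (a ++ u ++ b) (a ++ v ++ b).
Proof.
  induction 1.
  - apply rst_step, step_ctx; auto.
  - apply rst_refl.
  - apply rst_sym; auto.
  - eapply rst_trans; eauto.
Qed.

Lemma weq_pre (P : PAops) (a u v : list P) : weq P u v -> weq P (a ++ u) (a ++ v).
Proof. intro H. pose proof (weq_ctx a [] H). rewrite !app_nil_r in H0. auto. Qed.
Lemma weq_suf (P : PAops) (b u v : list P) : weq P u v -> weq P (u ++ b) (v ++ b).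
Proof. intro H. apply (weq_ctx [] b H). Qed.
Lemma weq_cons (P : PAops) (x : P) (u v : list P) : weq P u v -> weq P (x :: u) (x :: v).
Proof. intro H. apply (weq_pre [x] H). Qed.

Lemma weq_sym (P : PAops) (u v : list P) : weq P u v -> weq P v u.
Proof. apply rst_sym. Qed.
Lemma weq_trans (P : PAops) (u v w : list P) : weq P u v -> weq P v w -> weq P u w.
Proof. apply rst_trans. Qed.
Lemma weq_refl (P : PAops) (u : list P) : weq P u u.
Proof. apply rst_refl. Qed.

Lemma st_idem0 (P : PAops) (p : P) r : weq P (p :: p :: r) (p :: r).
Proof. apply rst_step. apply (st_idem P [] r p). Qed.
Lemma st_theta0 (P : PAops) (p q : P) r : weq P (p :: q :: r) (p :: theta p q :: r).
Proof. apply rst_step. apply (st_theta P [] r p q). Qed.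
Lemma st_delta0 (P : PAops) (p q : P) r : weq P (p :: q :: r) (delta q p :: q :: r).
Proof. apply rst_step. apply (st_delta P [] r p q). Qed.

Definition fDstep (P : PAops) (x : P) (acc : option P) : option P :=
  Some (match acc with None => x | Some y => delta y x end).
Definition fDo (P : PAops) (l : list P) : option P := fold_right (@fDstep P) None l.
Definition fRstep (P : PAops) (acc : option P) (x : P) : option P :=
  Some (match acc with None => x | Some y => theta y x end).
Definition fRo (P : PAops) (l : list P) : option P := fold_left (@fRstep P) l None.

Lemma fDo_app (P : PAops) (l m : list P) : fDo (l ++ m) = fold_right (@fDstep P) (fDo m) l.
Proof. unfold fDo. apply fold_right_app. Qed.
Lemma fRo_app (P : PAops) (l m : list P) : fRo (l ++ m) = fold_left (@fRstep P) m (fRo l).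
Proof. unfold fRo. apply fold_left_app. Qed.

Lemma fDo_step (P : PAops) (HP : is_PA P) u v : step P u v -> fDo u = fDo v.
Proof.
  intro H; destruct H; rewrite !fDo_app; f_equal; simpl;
  destruct (fDo r) as [x|]; unfold fDstep; simpl; f_equal.
  - apply de_de; auto.
  - apply de_idem; auto.
  - rewrite A10; auto.
  - rewrite de_th2; auto.
  - rewrite A6; auto.
  - rewrite de_self; auto.
Qed.

Lemma fRo_step (P : PAops) (HP : is_PA P) u v : step P u v -> fRo u = fRo v.
Proof.
  intro H; destruct H;
  replace (l ++ p :: p :: r) with ((l ++ [p; p]) ++ r) by (rewrite <- app_assoc; auto);
  try replace (l ++ p :: r) with ((l ++ [p]) ++ r) by (rewrite <- app_assoc; auto);
  try replace (l ++ p :: q :: r) with ((l ++ [p; q]) ++ r) by (rewrite <- app_assoc; auto);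
  try replace (l ++ p :: theta p q :: r) with ((l ++ [p; theta p q]) ++ r) by (rewrite <- app_assoc; auto);
  try replace (l ++ delta q p :: q :: r) with ((l ++ [delta q p; q]) ++ r) by (rewrite <- app_assoc; auto);
  rewrite !(fRo_app _ r); f_equal; rewrite !fRo_app; simpl;
  destruct (fRo l) as [y|]; unfold fRstep; simpl; f_equal.
  - apply th_th; auto.
  - apply th_idem; auto.
  - rewrite A5; auto.
  - rewrite th_self; auto.
  - rewrite A9; auto.
  - rewrite th_de2; auto.
Qed.

Lemma fDo_weq (P : PAops) (HP : is_PA P) u v : weq P u v -> fDo u = fDo v.
Proof. induction 1; eauto using fDo_step; congruence. Qed.
Lemma fRo_weq (P : PAops) (HP : is_PA P) u v : weq P u v -> fRo u = fRo v.
Proof. induction 1; eauto using fRo_step; congruence. Qed.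

Lemma fDo_cons_some (P : PAops) (x : P) l : exists d, fDo (x :: l) = Some d.
Proof. simpl. eexists. reflexivity. Qed.
Lemma fRo_app_some (P : PAops) (x : P) l : exists d, fRo (l ++ [x]) = Some d.
Proof. rewrite fRo_app. simpl. eexists. reflexivity. Qed.
Lemma fRo_cons_some (P : PAops) (x : P) l : exists d, fRo (x :: l) = Some d.
Proof. destruct (@exists_last _ (x :: l)) as [l' [y E]]. discriminate. rewrite E. apply fRo_app_some. Qed.

Lemma Fcar_eq (P : PAops) (a b : Fcar P) : fcls a = fcls b -> a = b.
Proof. destruct a, b; simpl; intro; subst; f_equal; apply proof_irrelevance. Qed.

Lemma cls_eq (P : PAops) (w1 w2 : word P) : weq P (wlist w1) (wlist w2) -> cls w1 = cls w2.
Proof.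
  intro H; apply Fcar_eq; simpl; apply functional_extensionality; intro l;
  apply propositional_extensionality; split; intro; eauto using weq_trans, weq_sym.
Qed.

Lemma cls_inv (P : PAops) (w1 w2 : word P) : cls w1 = cls w2 -> weq P (wlist w1) (wlist w2).
Proof.
  intro H. apply (f_equal (@fcls P)) in H. simpl in H.
  rewrite H. apply weq_refl.
Qed.

Lemma rep_spec (P : PAops) (a : Fcar P) : fcls a = weq P (wlist (rep a)).
Proof. unfold rep. destruct constructive_indefinite_description; auto. Qed.

Lemma cls_rep (P : PAops) (a : Fcar P) : cls (rep a) = a.
Proof. apply Fcar_eq. simpl. symmetry. apply rep_spec. Qed.

Lemma rep_cls (P : PAops) (w : word P) : weq P (wlist (rep (cls w))) (wlist w).
Proof. apply cls_inv. apply cls_rep. Qed.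

Definition wapp (P : PAops) (u v : word P) : word P := (fst u, snd u ++ wlist v).
Lemma wlist_wapp (P : PAops) (u v : word P) : wlist (wapp u v) = wlist u ++ wlist v.
Proof. reflexivity. Qed.

Lemma Fmul_cls (P : PAops) (u v : word P) : Fmul (cls u) (cls v) = cls (wapp u v).
Proof.
  unfold Fmul. apply cls_eq. simpl.
  change (weq P (wlist (rep (cls u)) ++ wlist (rep (cls v))) (wlist u ++ wlist v)).
  eapply weq_trans. apply weq_suf. apply rep_cls.
  apply weq_pre. apply rep_cls.
Qed.

Fixpoint thn (P : PAops) (x : P) (l : list P) : list P :=
  match l with [] => [] | q :: l' => theta x q :: thn (theta x q) l' end.
Fixpoint tchain (P : PAops) (x : P) (l : list P) : Prop :=
  match l with [] => True | q :: l' => theta x q = q /\ tchain q l' end.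
Fixpoint dn (P : PAops) (x : P) (l : list P) : P * list P :=
  match l with [] => (x, [])
  | q :: l' => (delta (fst (dn q l')) x, fst (dn q l') :: snd (dn q l')) end.

Lemma thn_weq (P : PAops) (x : P) l : weq P (x :: l) (x :: thn x l).
Proof.
  revert x; induction l as [|q l IH]; intro x; simpl. apply weq_refl.
  eapply weq_trans. apply st_theta0. apply weq_cons. apply IH.
Qed.

Lemma thn_tchain (P : PAops) (HP : is_PA P) (x : P) l : tchain x (thn x l).
Proof.
  revert x; induction l as [|q l IH]; intro x; simpl; auto.
  split; auto. apply th_self; auto.
Qed.

Lemma dn_weq (P : PAops) (x : P) l : weq P (x :: l) (wlist (dn x l)).
Proof.
  revert x; induction l as [|q l IH]; intro x; simpl. apply weq_refl.
  eapply weq_trans. apply weq_cons. apply IH. unfold wlist. apply st_delta0.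
Qed.

Lemma dn_chain (P : PAops) (HP : is_PA P) (x : P) l : tchain x l ->
  chain _ (fst (dn x l)) (snd (dn x l)) /\ theta (fst (dn x l)) x = fst (dn x l)
  /\ delta (fst (dn x l)) x = fst (dn x l).
Proof.
  revert x; induction l as [|q l IH]; intros x H; simpl.
  - rewrite th_idem, de_idem; auto.
  - destruct H as [H1 H2]. destruct (IH q H2) as [C [T D]].
    set (y := fst (dn q l)) in *.
    split; [split; [split|]|split]; auto.
    + symmetry. apply de_self; auto.
    + symmetry. apply lemC with (e' := q); auto.
    + apply A8; auto.
    + apply de_de; auto.
Qed.

Lemma chain_exists (P : PAops) (HP : is_PA P) (w : word P) :
  exists c : word P, chain _ (fst c) (snd c) /\ weq P (wlist w) (wlist c).
Proof.
  destruct w as [x l].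
  exists (dn x (thn x l)). split.
  - apply dn_chain; auto. apply thn_tchain; auto.
  - eapply weq_trans. apply thn_weq. apply dn_weq.
Qed.

Lemma chain_rep_spec (P : PAops) (HP : is_PA P) (a : Fcar P) :
  chain _ (fst (chain_rep a)) (snd (chain_rep a)) /\ fcls a (wlist (chain_rep a)).
Proof.
  unfold chain_rep. apply epsilon_spec.
  destruct (chain_exists HP (rep a)) as [c [H1 H2]]. exists c. split; auto.
  rewrite rep_spec. auto.
Qed.

Lemma chain_fD (P : PAops) (x : P) l : chain _ x l -> fDo (x :: l) = Some x.
Proof.
  revert x; induction l as [|q l IH]; intros x H; simpl. reflexivity.
  destruct H as [[H1 H2] H3]. simpl in IH. rewrite IH; auto. unfold fDstep. rewrite <- H1. auto.
Qed.

Lemma last_cons (A : Type) (q x : A) l : last (q :: l) x = last l q.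
Proof.
  revert q x; induction l as [|p l IH]; intros q x. reflexivity.
  change (last (p :: l) x = last (p :: l) q). rewrite !IH. auto.
Qed.

Lemma chain_fR_aux (P : PAops) (x : P) l : chain _ x l -> fold_left (@fRstep P) l (Some x) = Some (last l x).
Proof.
  revert x; induction l as [|q l IH]; intros x H. reflexivity.
  destruct H as [[H1 H2] H3]. simpl. unfold fRstep at 2. rewrite <- H2. rewrite IH; auto.
  rewrite <- (last_cons q x l). auto.
Qed.
Lemma chain_fR (P : PAops) (x : P) l : chain _ x l -> fRo (x :: l) = Some (last l x).
Proof. intro H. apply chain_fR_aux; auto. Qed.

Lemma FD_cls (P : PAops) (HP : is_PA P) (w : word P) d :
  fDo (wlist w) = Some d -> FD (cls w) = xgen _ d.
Proof.
  intro H. unfold FD. destruct (chain_rep_spec HP (cls w)) as [C W].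
  simpl in W. apply fDo_weq in W; auto. rewrite H in W. unfold wlist in W.
  rewrite chain_fD in W; auto. congruence.
Qed.

Lemma FR_cls (P : PAops) (HP : is_PA P) (w : word P) d :
  fRo (wlist w) = Some d -> FR (cls w) = xgen _ d.
Proof.
  intro H. unfold FR. destruct (chain_rep_spec HP (cls w)) as [C W].
  simpl in W. apply fRo_weq in W; auto. rewrite H in W. unfold wlist in W.
  rewrite chain_fR in W; auto. congruence.
Qed.

Lemma cls_surj (P : PAops) (a : Fcar P) : exists w, a = cls w.
Proof. exists (rep a). symmetry. apply cls_rep. Qed.

Lemma fRo_none (P : PAops) (l : list P) : fRo l = None -> l = [].
Proof.
  destruct l as [|x l]; auto. destruct (fRo_cons_some x l) as [d E]. congruence.
Qed.

Lemma weq_fD_cons (P : PAops) (HP : is_PA P) (l : list P) d : fDo l = Some d -> weq P (d :: l) l.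
Proof.
  revert d; induction l as [|p l IH]; intros d H. discriminate.
  simpl in H. destruct (fDo l) as [d'|] eqn:E; unfold fDstep in H; injection H as H; subst d.
  - specialize (IH d' eq_refl).
    eapply weq_trans. apply weq_cons, weq_cons, weq_sym, IH.
    eapply weq_trans. apply weq_cons, st_delta0.
    eapply weq_trans. apply st_idem0.
    eapply weq_trans. apply weq_sym, st_delta0.
    apply weq_cons, IH.
  - destruct l. apply st_idem0. destruct (fDo_cons_some p0 l). congruence.
Qed.

Lemma weq_fR_snoc (P : PAops) (HP : is_PA P) (l : list P) r : fRo l = Some r -> weq P (l ++ [r]) l.
Proof.
  revert r; induction l as [|p l IH] using rev_ind; intros r H. discriminate.
  rewrite fRo_app in H. simpl in H. destruct (fRo l) as [r'|] eqn:E; unfold fRstep in H; injection H as H; subst r.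
  - specialize (IH r' eq_refl). rewrite <- app_assoc. simpl.
    eapply weq_trans. apply weq_suf with (b := [p; theta r' p]), weq_sym, IH.
    rewrite <- app_assoc. simpl.
    eapply weq_trans. apply weq_pre, st_theta0.
    eapply weq_trans. apply weq_pre, weq_cons, st_idem0.
    eapply weq_trans. apply weq_pre, weq_sym, st_theta0.
    replace (l ++ [r'; p]) with ((l ++ [r']) ++ [p]) by (rewrite <- app_assoc; auto).
    apply weq_suf, IH.
  - apply fRo_none in E. subst l. simpl. apply st_idem0.
Qed.

Lemma Fmul_gen (P : PAops) (x : P) (l : list P) : cls (x, l) = match l with [] => xgen _ x | y :: l' => Fmul (xgen _ x) (cls (y, l')) end.
Proof. destruct l. reflexivity. unfold xgen. rewrite Fmul_cls. reflexivity. Qed.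

Lemma FreeDRC_is_DRC (P : PAops) (HP : is_PA P) : is_DRC (FreeDRC P).
Proof.
  split.
  - intros a b c. simpl.
    destruct (cls_surj a) as [u ->]; destruct (cls_surj b) as [v ->]; destruct (cls_surj c) as [w ->].
    rewrite !Fmul_cls. apply cls_eq. rewrite !wlist_wapp. rewrite app_assoc. apply weq_refl.
  - intros a b. simpl.
    destruct (cls_surj a) as [u ->]; destruct (cls_surj b) as [v ->].
    destruct (fDo_cons_some (fst u) (snd u)) as [du Edu].
    destruct (fRo_cons_some (fst u) (snd u)) as [ru Eru].
    destruct (fDo_cons_some (fst v) (snd v)) as [dv Edv].
    destruct (fRo_cons_some (fst v) (snd v)) as [rv Erv].
    change (fst u :: snd u) with (wlist u) in *.
    change (fst v :: snd v) with (wlist v) in *.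
    destruct (fDo_cons_some (fst u) (snd u ++ wlist v)) as [e Ee].
    destruct (fRo_cons_some (fst u) (snd u ++ wlist v)) as [e' Ee'].
    change (fst u :: snd u ++ wlist v) with (wlist (wapp u v)) in *.
    assert (FDu : FD (cls u) = xgen _ du) by (apply FD_cls; auto).
    assert (FRu : FR (cls u) = xgen _ ru) by (apply FR_cls; auto).
    assert (FDv : FD (cls v) = xgen _ dv) by (apply FD_cls; auto).
    assert (FRv : FR (cls v) = xgen _ rv) by (apply FR_cls; auto).
    assert (FDe : FD (cls (wapp u v)) = xgen _ e) by (apply FD_cls; auto).
    assert (FRe : FR (cls (wapp u v)) = xgen _ e') by (apply FR_cls; auto).
    rewrite !Fmul_cls, FDu, FRu, FDv, FRv, FDe, FRe. unfold xgen. rewrite !Fmul_cls.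
    assert (Hgen : forall x : P, FD (xgen _ x) = xgen _ x /\ FR (xgen _ x) = xgen _ x).
    { intro x. split; [apply FD_cls|apply FR_cls]; auto. }
    split; [|split; [|split; [|split; [|split; [|split; [|split]]]]]].
    all: try (apply Hgen).
    + apply cls_eq. rewrite wlist_wapp. apply weq_fD_cons; auto.
    + apply cls_eq. rewrite wlist_wapp. apply weq_fR_snoc; auto.
    + symmetry. apply FD_cls; auto. rewrite !wlist_wapp.
      rewrite fDo_app. rewrite wlist_wapp, fDo_app in Ee. rewrite Edv in Ee. exact Ee.
    + symmetry. apply FR_cls; auto. rewrite !wlist_wapp.
      rewrite fRo_app. rewrite wlist_wapp, fRo_app in Ee'. rewrite Eru in Ee'. exact Ee'.
    + apply cls_eq. rewrite !wlist_wapp. simpl.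
      assert (He : delta e du = e).
      { assert (W : weq P (wlist u ++ wlist v) ((du :: wlist u) ++ wlist v))
          by (apply weq_suf, weq_sym, weq_fD_cons; auto).
        apply fDo_weq in W; auto. rewrite wlist_wapp in Ee.
        change (fDo ((du :: wlist u) ++ wlist v)) with (fDstep du (fDo (wlist u ++ wlist v))) in W.
        rewrite Ee in W. unfold fDstep in W. congruence. }
      apply weq_sym.
      eapply weq_trans. apply st_delta0. rewrite He.
      eapply weq_trans. apply st_idem0.
      eapply weq_trans. apply st_theta0. rewrite de_fix_th; auto. apply st_idem0.
    + apply cls_eq. rewrite !wlist_wapp. simpl.
      assert (He : theta e' rv = e').
      { assert (W : weq P (wlist u ++ wlist v) (wlist u ++ (wlist v ++ [rv])))
          by (apply weq_pre, weq_sym, weq_fR_snoc; auto).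
        apply fRo_weq in W; auto. rewrite app_assoc in W. rewrite (fRo_app _ [rv]) in W.
        rewrite wlist_wapp in Ee'. rewrite Ee' in W. simpl in W. unfold fRstep in W. congruence. }
      apply weq_sym.
      unfold wlist; simpl.
      eapply weq_trans. apply weq_cons, st_theta0. rewrite He.
      eapply weq_trans. apply weq_cons, st_idem0.
      eapply weq_trans. apply st_delta0. rewrite th_fix_de; auto. apply st_idem0.
Qed.

Lemma step_map (P Q : PAops) (phi : P -> Q) (Hphi : pa_hom P Q phi) u v :
  step P u v -> step Q (map phi u) (map phi v).
Proof.
  intro H; destruct H; rewrite !map_app; simpl.
  - constructor.
  - destruct (Hphi q p) as [E _]. rewrite E. constructor.
  - destruct (Hphi p q) as [_ E]. rewrite E. constructor.
Qed.

Lemma weq_map (P Q : PAops) (phi : P -> Q) (Hphi : pa_hom P Q phi) u v :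
  weq P u v -> weq Q (map phi u) (map phi v).
Proof.
  induction 1.
  - apply rst_step, step_map; auto.
  - apply rst_refl.
  - apply rst_sym; auto.
  - eapply rst_trans; eauto.
Qed.

Lemma fDo_map (P Q : PAops) (phi : P -> Q) (Hphi : pa_hom P Q phi) l :
  fDo (map phi l) = option_map phi (fDo l).
Proof.
  induction l as [|x l IH]. reflexivity.
  change (fDstep (phi x) (fDo (map phi l)) = option_map phi (fDstep x (fDo l))).
  rewrite IH. unfold fDstep.
  destruct (fDo l); simpl; auto.
  destruct (Hphi x p) as [_ E]. rewrite E. auto.
Qed.

Lemma fRo_map_aux (P Q : PAops) (phi : P -> Q) (Hphi : pa_hom P Q phi) l acc :
  fold_left (@fRstep Q) (map phi l) (option_map phi acc) = option_map phi (fold_left (@fRstep P) l acc).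
Proof.
  revert acc; induction l as [|x l IH]; intro acc; simpl. reflexivity.
  rewrite <- IH. f_equal. unfold fRstep. destruct acc; simpl; auto.
  destruct (Hphi x p) as [E _]. rewrite E. auto.
Qed.

Lemma fRo_map (P Q : PAops) (phi : P -> Q) (Hphi : pa_hom P Q phi) l :
  fRo (map phi l) = option_map phi (fRo l).
Proof. unfold fRo. apply (fRo_map_aux Hphi l None). Qed.

Lemma Fmor_cls (P Q : PAops) (phi : P -> Q) (Hphi : pa_hom P Q phi) (w : word P) :
  Fmor phi (cls w) = cls (phi (fst w), map phi (snd w)).
Proof.
  unfold Fmor. apply cls_eq.
  change (weq Q (map phi (wlist (rep (cls w)))) (map phi (wlist w))).
  apply weq_map; auto. apply rep_cls.
Qed.

Definition prodO (P : PAops) (S : DRCops) (f : P -> S) (l : list P) : option S :=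
  fold_right (fun x acc => Some (match acc with None => f x | Some s => mul (f x) s end)) None l.

Lemma proj_props (S : DRCops) (HS : is_DRC S) (x : S) : is_proj S x ->
  opD x = x /\ opR x = x /\ mul x x = x.
Proof.
  intros [a <-]. destruct HS as [As Ax].
  assert (R1 : opR (opD a) = opD a) by apply (Ax a a).
  assert (D1 : opD (opD a) = opD a).
  { destruct (Ax (opD a) a) as [_ [_ [_ [_ [_ [_ [_ H]]]]]]].
    rewrite R1 in H. exact H. }
  split; auto. split; auto.
  pose proof (proj1 (Ax (opD a) a)) as H. rewrite D1 in H. auto.
Qed.

Lemma pq_R (S : DRCops) (HS : is_DRC S) (x y : S) : is_proj S x -> is_proj S y ->
  mul x (opR (mul x y)) = mul x y.
Proof.
  intros Px Py. destruct (proj_props HS Py) as [Dy [Ry Iy]].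
  pose proof HS as [As Ax].
  destruct (Ax x y) as [_ [H2 [_ [_ [_ [H6 _]]]]]].
  assert (E : mul y (opR (mul x y)) = opR (mul x y)).
  { rewrite Ry in H6. rewrite H6 at 1. rewrite <- !As. rewrite Iy. rewrite <- H6. auto. }
  rewrite <- E. rewrite <- As. destruct (Ax (mul x y) y) as [_ [H _]]. exact H.
Qed.

Lemma pq_D (S : DRCops) (HS : is_DRC S) (x y : S) : is_proj S x -> is_proj S y ->
  mul (opD (mul x y)) y = mul x y.
Proof.
  intros Px Py. destruct (proj_props HS Px) as [Dx [Rx Ix]].
  pose proof HS as [As Ax].
  destruct (Ax x y) as [H1 [_ [_ [_ [H5 _]]]]].
  assert (E : mul (opD (mul x y)) x = opD (mul x y)).
  { rewrite Dx in H5. rewrite H5 at 1. rewrite !As. rewrite Ix. rewrite <- As. rewrite <- H5. auto. }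
  rewrite <- E. rewrite As. destruct (Ax (mul x y) y) as [H _]. exact H.
Qed.

Lemma prodO_step (P : PAops) (S : DRCops) (HS : is_DRC S) (f : P -> S) (Hf : pa_hom_to_P P S f) u v :
  step P u v -> prodO f u = prodO f v.
Proof.
  destruct Hf as [Hp Hf].
  pose proof HS as [As _].
  intro H; destruct H; unfold prodO; rewrite !fold_right_app; f_equal; simpl;
  destruct (fold_right _ None r) as [s|]; f_equal.
  - rewrite <- As. destruct (proj_props HS (Hp p)) as [_ [_ I]]. rewrite I. auto.
  - destruct (proj_props HS (Hp p)) as [_ [_ I]]. auto.
  - destruct (Hf q p) as [E _]. rewrite E. rewrite <- !As. rewrite pq_R; auto.
  - destruct (Hf q p) as [E _]. rewrite E. rewrite pq_R; auto.
  - destruct (Hf p q) as [_ E]. rewrite E. rewrite <- !As. rewrite pq_D; auto.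
  - destruct (Hf p q) as [_ E]. rewrite E. rewrite pq_D; auto.
Qed.

Lemma prodO_weq (P : PAops) (S : DRCops) (HS : is_DRC S) (f : P -> S) (Hf : pa_hom_to_P P S f) u v :
  weq P u v -> prodO f u = prodO f v.
Proof. induction 1; eauto using prodO_step; congruence. Qed.

Lemma prodO_cons (P : PAops) (S : DRCops) (f : P -> S) x l : exists s, prodO f (x :: l) = Some s.
Proof. simpl. eexists; reflexivity. Qed.

Lemma prodO_app (P : PAops) (S : DRCops) (HS : is_DRC S) (f : P -> S) l m a b :
  prodO f l = Some a -> prodO f m = Some b -> prodO f (l ++ m) = Some (mul a b).
Proof.
  revert a; induction l as [|x l IH]; intros a Ha Hb. discriminate.
  change (prodO f ((x :: l) ++ m)) with (Some (match prodO f (l ++ m) with None => f x | Some s => mul (f x) s end)).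
  change (prodO f (x :: l)) with (Some (match prodO f l with None => f x | Some s => mul (f x) s end)) in Ha.
  destruct l as [|y l].
  - change ([] ++ m) with m. rewrite Hb. simpl in Ha. congruence.
  - destruct (prodO_cons f y l) as [a' Ea']. rewrite Ea' in Ha.
    rewrite (IH a' Ea' Hb). injection Ha as <-.
    destruct HS as [As _]. rewrite As. auto.
Qed.

Lemma prodO_D (P : PAops) (S : DRCops) (HS : is_DRC S) (f : P -> S) (Hf : pa_hom_to_P P S f) l s d :
  prodO f l = Some s -> fDo l = Some d -> opD s = f d.
Proof.
  revert s d; induction l as [|x l IH]; intros s d Hs Hd. discriminate.
  destruct l as [|y l].
  - simpl in Hs, Hd. unfold fDstep in Hd. injection Hs as <-. injection Hd as <-.
    apply (proj_props HS (proj1 Hf x)).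
  - destruct (prodO_cons f y l) as [s' Es']. destruct (fDo_cons_some y l) as [d' Ed'].
    change (prodO f (x :: y :: l)) with (Some (match prodO f (y :: l) with None => f x | Some s => mul (f x) s end)) in Hs.
    change (fDo (x :: y :: l)) with (fDstep x (fDo (y :: l))) in Hd.
    rewrite Es' in Hs. rewrite Ed' in Hd. unfold fDstep in Hd.
    injection Hs as <-. injection Hd as <-.
    destruct HS as [As Ax]. destruct (Ax (f x) s') as [_ [_ [E _]]].
    rewrite E. rewrite (IH s' d'); auto. destruct (proj2 Hf x d') as [_ E2]. auto.
Qed.

Lemma prodO_R (P : PAops) (S : DRCops) (HS : is_DRC S) (f : P -> S) (Hf : pa_hom_to_P P S f) l s d :
  prodO f l = Some s -> fRo l = Some d -> opR s = f d.
Proof.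
  revert s d; induction l as [|x l IH] using rev_ind; intros s d Hs Hd. discriminate.
  destruct l as [|y l].
  - simpl in Hs, Hd. unfold fRstep in Hd. injection Hs as <-. injection Hd as <-.
    apply (proj_props HS (proj1 Hf x)).
  - destruct (prodO_cons f y l) as [s' Es']. destruct (fRo_cons_some y l) as [d' Ed'].
    rewrite (prodO_app (m := [x]) (b := f x) HS Es' eq_refl) in Hs.
    rewrite fRo_app, Ed' in Hd. simpl in Hd. unfold fRstep in Hd.
    injection Hs as <-. injection Hd as <-.
    destruct HS as [As Ax]. destruct (Ax s' (f x)) as [_ [_ [_ [E _]]]].
    rewrite E. rewrite (IH s' d'); auto. destruct (proj2 Hf x d') as [E2 _]. auto.
Qed.

Definition gmap (P : PAops) (S : DRCops) (f : P -> S) (a : FreeDRC P) : S :=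
  match prodO f (wlist (rep a)) with Some s => s | None => f (fst (rep a)) end.

Lemma gmap_cls (P : PAops) (S : DRCops) (HS : is_DRC S) (f : P -> S) (Hf : pa_hom_to_P P S f) w s :
  prodO f (wlist w) = Some s -> gmap f (cls w) = s.
Proof.
  intro H. unfold gmap. rewrite (prodO_weq HS Hf (rep_cls w)). rewrite H. auto.
Qed.

Theorem theorem8p13 :
  forall P : PAops, is_PA P ->
    is_DRC (FreeDRC P) /\
    (forall (Q : PAops), is_PA Q -> forall phi : P -> Q, pa_hom P Q phi ->
        drc_hom (FreeDRC P) (FreeDRC Q) (Fmor phi) /\ forall p, Fmor phi (eta p) = eta (phi p)) /\
    pa_hom_to_P P (FreeDRC P) (@eta P) /\
    (forall S : DRCops, is_DRC S -> forall f : P -> S, pa_hom_to_P P S f ->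
        exists! g : FreeDRC P -> S, drc_hom (FreeDRC P) S g /\ forall p, g (eta p) = f p) /\
    (forall p q : P, eta p = eta q -> p = q) /\
    (forall x : FreeDRC P, is_proj (FreeDRC P) x -> exists p : P, eta p = x).
Proof.
  intros P HP.
  split; [apply FreeDRC_is_DRC; auto|].
  split.
  { intros Q HQ phi Hphi. split.
    - intros a b. simpl.
      destruct (cls_surj a) as [u ->]; destruct (cls_surj b) as [v ->].
      destruct (fDo_cons_some (fst u) (snd u)) as [du Edu].
      destruct (fRo_cons_some (fst u) (snd u)) as [ru Eru].
      change (fst u :: snd u) with (wlist u) in *.
      split; [|split].
      + rewrite Fmul_cls, !(Fmor_cls Hphi), Fmul_cls. apply cls_eq.
        unfold wapp, wlist; simpl. rewrite map_app. apply weq_refl.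
      + rewrite (FD_cls HP Edu). unfold xgen. rewrite !(Fmor_cls Hphi).
        symmetry. apply FD_cls; auto.
        change (fDo (map phi (wlist u)) = Some (phi du)).
        rewrite (fDo_map Hphi), Edu. reflexivity.
      + rewrite (FR_cls HP Eru). unfold xgen. rewrite !(Fmor_cls Hphi).
        symmetry. apply FR_cls; auto.
        change (fRo (map phi (wlist u)) = Some (phi ru)).
        rewrite (fRo_map Hphi), Eru. reflexivity.
    - intro p. unfold eta, xgen. rewrite (Fmor_cls Hphi). reflexivity. }
  split.
  { split.
    - intro p. exists (xgen _ p). apply FD_cls; auto.
    - intros p q. simpl. unfold eta, xgen. rewrite !Fmul_cls. split.
      + symmetry. apply FR_cls; auto.
      + symmetry. apply FD_cls; auto. }
  split.
  { intros S HS f Hf. exists (gmap f). split.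
    - split.
      + intros a b. simpl.
        destruct (cls_surj a) as [u ->]; destruct (cls_surj b) as [v ->].
        destruct (prodO_cons f (fst u) (snd u)) as [su Esu].
        destruct (prodO_cons f (fst v) (snd v)) as [sv Esv].
        destruct (fDo_cons_some (fst u) (snd u)) as [du Edu].
        destruct (fRo_cons_some (fst u) (snd u)) as [ru Eru].
        change (fst u :: snd u) with (wlist u) in *.
        change (fst v :: snd v) with (wlist v) in *.
        rewrite (gmap_cls HS Hf Esu).
        split; [|split].
        * rewrite Fmul_cls. rewrite (gmap_cls HS Hf Esv). apply gmap_cls; auto.
          rewrite wlist_wapp. apply prodO_app; auto.
        * rewrite (FD_cls HP Edu). unfold xgen. rewrite (gmap_cls HS Hf (s := f du)); auto.
          symmetry. apply (prodO_D HS Hf Esu Edu).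
        * rewrite (FR_cls HP Eru). unfold xgen. rewrite (gmap_cls HS Hf (s := f ru)); auto.
          symmetry. apply (prodO_R HS Hf Esu Eru).
      + intro p. unfold eta, xgen. apply gmap_cls; auto.
    - intros h [Hh He]. apply functional_extensionality. intro a.
      destruct (cls_surj a) as [[x l] ->].
      destruct (prodO_cons f x l) as [s Es].
      rewrite (gmap_cls (w := (x, l)) HS Hf Es).
      revert x s Es. induction l as [|y l IH]; intros x s Es.
      + simpl in Es. injection Es as <-. rewrite <- He. reflexivity.
      + rewrite Fmul_gen. destruct (Hh (xgen _ x) (cls (y, l))) as [E _]. simpl in E. rewrite E.
        destruct (prodO_cons f y l) as [s' Es'].
        change (prodO f (x :: y :: l)) with (Some (match prodO f (y :: l) with None => f x | Some s => mul (f x) s end)) in Es.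
        rewrite Es' in Es. injection Es as <-.
        rewrite <- (IH y s'); auto. unfold xgen. rewrite <- He. reflexivity. }
  split.
  { intros p q H. unfold eta, xgen in H. apply cls_inv in H. apply fDo_weq in H; auto.
    simpl in H. unfold fDstep in H. congruence. }
  { intros x [a <-]. destruct (cls_surj a) as [u ->].
    destruct (fDo_cons_some (fst u) (snd u)) as [du Edu].
    exists du. symmetry. apply FD_cls; auto. }
Qed.
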